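(* For every integer $i\ge1$ there exist $R_i^0,\dots,R_i^{i-1}\in\mathrm{End}(\mathbb{R}^n)[X_0,\dots,X_{i-1}]$ such that \[ Q_i^{i+k}=\sum_{j=0}^{i-1}k^jR_i^j\qquad\text{for all integers }k\ge0 \] (with the convention $0^0=1$). Furthermore, $R_i^{i-1}=\dfrac{BP_{i-1}}{(i-1)!}$.
   Context: Let $n\ge1$ and $A,B\in\mathrm{End}(\mathbb{R}^n)$. $\mathrm{End}(\mathbb{R}^n)[X_0,\dots,X_{k-1}]$ denotes polynomials in commuting scalar indeterminates $X_0,\dots,X_{k-1}$ with coefficients in $\mathrm{End}(\mathbb{R}^n)$ (for $k=0$, just $\mathrm{End}(\mathbb{R}^n)$), and $\mathrm{End}(\mathbb{R}^n)[(X_k)_{k\in\mathbb{N}}]$ is the union of these. Define the linear map $\Psi$ on $\mathrm{End}(\mathbb{R}^n)[(X_k)_{k\in\mathbb{N}}]$ by $\Psi(P)(X_0,\dots,X_k)=P(X_0,\dots,X_{k-1})(A+X_0B)+\sum_{i=0}^{k-1}\frac{\partial P}{\partial X_i}(X_0,\dots,X_{k-1})X_{i+1}$, where $k=\min\{\ell\in\mathbb{N}:P\in\mathrm{End}(\mathbb{R}^n)[X_0,\dots,X_{\ell-1}]\}$. Define $P_0=I$ (identity) and $P_{k+1}=\Psi(P_k)$ for $k\in\mathbb{N}$, so $P_k\in\mathrm{End}(\mathbb{R}^n)[X_0,\dots,X_{k-1}]$. For integers $1\le i\le k$ let $Q_i^k=\partial P_k/\partial X_{k-i}$. *)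

(* Defs.v *)
From mathcomp Require Import all_boot all_order all_algebra.
From mathcomp Require Import reals.
From mathcomp Require Import mpoly.
Set Implicit Arguments. Unset Strict Implicit. Unset Printing Implicit Defensive.
Import GRing.Theory.
Local Open Scope ring_scope.

(* End(R^d) with d = n.+1 (so d >= 1) is represented by 'M[R]_(n.+1);
   End(R^d)[X_0,...,X_{k-1}] is {mpoly 'M[R]_(n.+1)[k]}. *)
Section Defs.
Context (R : realType) (n : nat).
Local Notation M := 'M[R]_n.+1.

Definition membed (m N : nat) (h : (m <= N)%N) (p : {mpoly M[m]}) : {mpoly M[N]} :=
  mmap (@mpolyC _ _) (fun j : 'I_m => 'X_(widen_ord h j)) p.

(* partial derivative w.r.t. X_j (zero if j >= number of variables,
   i.e. if the polynomial does not involve X_j) *)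
Definition pderiv (k j : nat) (p : {mpoly M[k]}) : {mpoly M[k]} :=
  match insub j with Some o => p^`M(o) | None => 0 end.

Definition Psi (A B : M) (k : nat) (P : {mpoly M[k]}) : {mpoly M[k.+1]} :=
  mwiden P * (A%:MP + 'X_(@ord0 k) * B%:MP)
  + \sum_(i < k) mwiden (P^`M(i)) * 'X_(lift ord0 i).

Fixpoint Pk (A B : M) (k : nat) : {mpoly M[k]} :=
  match k with
  | 0 => 1
  | k'.+1 => Psi A B (Pk A B k')
  end.

Definition Qk (A B : M) (i k : nat) : {mpoly M[k]} := pderiv (k - i) (Pk A B k).

End Defs.

(* Main.v *)
Require Import Defs.
From HB Require Import structures.
From mathcomp Require Import all_boot all_order all_algebra.
From mathcomp Require Import reals.
From mathcomp Require Import mpoly.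
Import GRing.Theory Num.Theory.
Local Open Scope ring_scope.
Set Implicit Arguments. Unset Strict Implicit.

Section Aux.
Context (R : realType) (n : nat).
Local Notation M := 'M[R]_n.+1.

Lemma mpoly_ringind k (P : {mpoly M[k]} -> Prop) :
  (forall p q, P p -> P q -> P (p + q)) ->
  (forall p q, P p -> P q -> P (p * q)) ->
  (forall c, P c%:MP) -> (forall i, P 'X_i) -> forall p, P p.
Proof.
move=> HD HM HC HX p; rewrite [p]mpolyE.
have H0 : P 0 by rewrite -mpolyC0.
have H1 : P 1 by rewrite -mpolyC1.
apply: (big_ind P H0 HD) => m _.
rewrite -mul_mpolyC; apply: (HM) => //.
rewrite mpolyXE_id; apply: (big_ind P H1 HM) => i _.
move: (m i) => e; elim: e => [|e IH]; first by rewrite expr0.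
by rewrite exprS; apply: (HM).
Qed.

Lemma membed_is_additive a N (h : (a <= N)%N) : additive (@membed R n a N h).
Proof. exact: mmap_is_additive. Qed.

HB.instance Definition _ (a N : nat) (h : (a <= N)%N) :=
  GRing.isAdditive.Build {mpoly M[a]} {mpoly M[N]} (@membed R n a N h)
    (@membed_is_additive a N h).

Lemma membed_is_multiplicative a N (h : (a <= N)%N) :
  multiplicative (@membed R n a N h).
Proof.
apply/commr_mmap_is_multiplicative=> [i p|p m m']; first exact/commr_mpolyX.
rewrite /= /mmap1; elim/big_rec: _ => /= [|i q _]; first exact/commr1.
exact/commrM/commrX/commr_mpolyX.
Qed.

HB.instance Definition _ (a N : nat) (h : (a <= N)%N) :=
  GRing.isMultiplicative.Build {mpoly M[a]} {mpoly M[N]} (@membed R n a N h)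
    (@membed_is_multiplicative a N h).

Lemma membedC a N (h : (a <= N)%N) (c : M) : membed h c%:MP = c%:MP.
Proof. by rewrite /membed mmapC. Qed.

Lemma membedX a N (h : (a <= N)%N) (i : 'I_a) : membed h ('X_i : {mpoly M[a]}) = 'X_(widen_ord h i).
Proof. by rewrite /membed mmapX mmap1U. Qed.

Lemma membedZ a N (h : (a <= N)%N) (c : M) (p : {mpoly M[a]}) : membed h (c *: p) = c *: membed h p.
Proof. by rewrite /membed mmapZ /= mul_mpolyC. Qed.

Lemma membed_comp a b c (h1 : (a <= b)%N) (h2 : (b <= c)%N) (h3 : (a <= c)%N) (p : {mpoly M[a]}) :
  membed h2 (membed h1 p) = membed h3 p.
Proof.
elim/mpoly_ringind: p => [p q Hp Hq|p q Hp Hq|d|i].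
- by rewrite !rmorphD; exact: (congr2 _ Hp Hq).
- by rewrite !rmorphM; exact: (congr2 _ Hp Hq).
- by rewrite !membedC.
- by rewrite !membedX (_ : widen_ord h2 (widen_ord h1 i) = widen_ord h3 i) //; apply: val_inj.
Qed.

Lemma membed_id a (h : (a <= a)%N) (p : {mpoly M[a]}) : membed h p = p.
Proof.
elim/mpoly_ringind: p => [p q Hp Hq|p q Hp Hq|d|i].
- by rewrite !rmorphD; exact: (congr2 _ Hp Hq).
- by rewrite !rmorphM; exact: (congr2 _ Hp Hq).
- by rewrite !membedC.
- by rewrite !membedX (_ : widen_ord h i = i) //; apply: val_inj.
Qed.

Lemma mwiden_membed a (p : {mpoly M[a]}) : mwiden p = membed (leqnSn a) p.
Proof.
elim/mpoly_ringind: p => [p q Hp Hq|p q Hp Hq|d|i].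
- by rewrite !rmorphD; exact: (congr2 _ Hp Hq).
- by rewrite !rmorphM; exact: (congr2 _ Hp Hq).
- by rewrite membedC mwidenC.
- rewrite membedX /mwiden mmapX mmap1U.
  by apply: (congr1 (fun j => 'X_j)); apply: val_inj.
Qed.


Lemma mderivX1 k (i j : 'I_k) : ('X_i : {mpoly M[k]})^`M(j) = (i == j)%:R.
Proof.
rewrite mderivX mnm1E; have [->|ne] := eqVneq i j.
  rewrite (_ : (U_(j) - U_(j))%MM = 0%MM) ?mpolyX0 ?scale1r //.
  by apply/mnmP => l; rewrite mnmBE subnn mnm0E.
by rewrite scale0r.
Qed.

Lemma pderivE k (o : 'I_k) (p : {mpoly M[k]}) : pderiv o p = p^`M(o).
Proof. by rewrite /pderiv; case: insubP => [o' _ /val_inj -> | ]; rewrite ?ltn_ord. Qed.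

Lemma pderiv_out k j (p : {mpoly M[k]}) : (k <= j)%N -> pderiv j p = 0.
Proof. by move=> hj; rewrite /pderiv insubF // ltnNge hj. Qed.

Lemma membed_derivW a N (h : (a <= N)%N) (o : 'I_a) (p : {mpoly M[a]}) :
  (membed h p)^`M(widen_ord h o) = membed h (p^`M(o)).
Proof.
elim/mpoly_ringind: p => [p q Hp Hq|p q Hp Hq|d|i].
- (rewrite rmorphD mderivD mderivD rmorphD; exact: (congr2 _ Hp Hq)).
- (rewrite rmorphM mderivM mderivM rmorphD !rmorphM; exact: (congr2 (fun x y => x * _ + _ * y) Hp Hq)).
- by rewrite membedC !mderivC rmorph0.
- have E : (widen_ord h i == widen_ord h o) = (i == o).
    by apply/eqP/eqP => [/(congr1 val) /= /val_inj|->].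
  rewrite membedX !mderivX1 E. by rewrite (rmorph_nat (membed h)).
Qed.
Lemma membed_derivO a N (h : (a <= N)%N) (o : 'I_N) (p : {mpoly M[a]}) :
  (a <= o)%N -> (membed h p)^`M(o) = 0.
Proof.
move=> ho; elim/mpoly_ringind: p => [p q Hp Hq|p q Hp Hq|d|i].
- rewrite rmorphD mderivD -[RHS](addr0 0); exact: (congr2 _ Hp Hq).
- rewrite rmorphM mderivM; transitivity (0 * membed h q + membed h p * 0).
    exact: (congr2 (fun x y => x * membed h q + membed h p * y) Hp Hq).
  by rewrite mul0r mulr0 addr0.
- by rewrite membedC !mderivC.
- rewrite membedX !mderivX1; case: eqP => // /(congr1 val) /= E.
  by move: (ltn_ord i); rewrite E ltnNge ho.
Qed.

Lemma membed_deriv a N (h : (a <= N)%N) (o : 'I_N) (p : {mpoly M[a]}) :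
  (membed h p)^`M(o) = membed h (pderiv o p).
Proof.
case: (ltnP o a) => ho.
  have -> : o = widen_ord h (Ordinal ho) by apply: val_inj.
  by rewrite membed_derivW pderivE.
by rewrite membed_derivO // pderiv_out // rmorph0.
Qed.

Lemma pderivD k j (p q : {mpoly M[k]}) : pderiv j (p + q) = pderiv j p + pderiv j q.
Proof. by rewrite /pderiv; case: insubP => [o _ _|_]; rewrite ?mderivD ?addr0. Qed.

Lemma pderivZ k j c (p : {mpoly M[k]}) : pderiv j (c *: p) = c *: pderiv j p.
Proof. by rewrite /pderiv; case: insubP => [o _ _|_]; rewrite ?mderivZ ?scaler0. Qed.

Lemma pderiv_comm k j (o : 'I_k) (p : {mpoly M[k]}) :
  pderiv j (p^`M(o)) = (pderiv j p)^`M(o).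
Proof. by rewrite /pderiv; case: insubP => [o' _ _|_]; [exact: mderiv_comm | rewrite mderiv0]. Qed.


Lemma mwiden_deriv k (o : 'I_k.+1) (p : {mpoly M[k]}) :
  (mwiden p)^`M(o) = mwiden (pderiv o p).
Proof. by rewrite !mwiden_membed membed_deriv. Qed.

Section PsiSec.
Variables (A B : M).
Local Notation L k := (A%:MP + 'X_(@ord0 k) * B%:MP : {mpoly M[k.+1]}).

Lemma PsiE k (p : {mpoly M[k]}) : Psi A B p =
  mwiden p * L k + \sum_(i < k) mwiden (p^`M(i)) * 'X_(lift ord0 i).
Proof. by []. Qed.

Lemma PsiD k (p q : {mpoly M[k]}) : Psi A B (p + q) = Psi A B p + Psi A B q.
Proof.
rewrite !PsiE mwidenD mulrDl addrACA; congr (_ + _).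
by rewrite -big_split /=; apply: eq_bigr => i _; rewrite mderivD mwidenD mulrDl.
Qed.

Lemma PsiZ k c (p : {mpoly M[k]}) : Psi A B (c *: p) = c *: Psi A B p.
Proof.
rewrite !PsiE mwidenZ scalerDr -scalerAl; congr (_ + _).
by rewrite scaler_sumr; apply: eq_bigr => i _; rewrite mderivZ mwidenZ scalerAl.
Qed.

Lemma Psi_is_additive k : additive (@Psi R n A B k).
Proof. by move=> p q; rewrite PsiD -scaleN1r PsiZ scaleN1r. Qed.

HB.instance Definition _ (k : nat) :=
  GRing.isAdditive.Build {mpoly M[k]} {mpoly M[k.+1]} (@Psi R n A B k)
    (@Psi_is_additive k).


Lemma membed_L a t (h : (a.+1 <= t.+1)%N) : membed h (L a) = L t.
Proof.
rewrite rmorphD rmorphM /= !membedC membedX.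
by rewrite (_ : widen_ord h ord0 = ord0) //; apply: val_inj.
Qed.

Lemma membed_mwiden a t (h : (a <= t)%N) (h' : (a.+1 <= t.+1)%N) (q : {mpoly M[a]}) :
  membed h' (mwiden q) = mwiden (membed h q).
Proof.
by rewrite !mwiden_membed !(@membed_comp a _ _ _ _ (leq_trans h (leqnSn t))).
Qed.

Lemma Psi_membed a t (h : (a <= t)%N) (h' : (a.+1 <= t.+1)%N) (p : {mpoly M[a]}) :
  Psi A B (membed h p) = membed h' (Psi A B p).
Proof.
rewrite !PsiE rmorphD rmorphM /= membed_L membed_mwiden; congr (_ + _).
rewrite rmorph_sum /= (bigID (fun i : 'I_t => (i < a)%N)) /=.
rewrite [X in _ + X]big1 ?addr0; last first.
  by move=> i; rewrite -leqNgt => hi; rewrite membed_derivO // rmorph0 mul0r.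
rewrite (big_ord_narrow h) /=; apply: eq_bigr => i _.
rewrite rmorphM /= membedX membed_mwiden membed_derivW; congr (_ * _); apply: (congr1 (fun j => 'X_j)); apply: val_inj.
Qed.


Lemma Psi0 k : Psi A B (0 : {mpoly M[k]}) = 0.
Proof. exact: raddf0. Qed.

Lemma pderiv_Psi k j (p : {mpoly M[k]}) : (0 < j)%N ->
  pderiv j (Psi A B p) = Psi A B (pderiv j p) + mwiden (pderiv j.-1 p).
Proof.
case: j => // j _ /=.
case: (ltnP j k) => hj; last first.
  by rewrite !pderiv_out // ?Psi0 ?mwiden0 ?addr0 // ltnW.
pose o' := Ordinal hj; pose o : 'I_k.+1 := lift ord0 o'.
have -> : j.+1 = val o by [].
have -> : j = val o' by [].
rewrite !pderivE PsiE mderivD mderivM.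
have -> : (L k)^`M(o) = 0.
  by rewrite mderivD mderivC mderivM mderivC mderivX1 (negbTE (neq_lift _ _)) mul0r mulr0 !addr0.
rewrite mulr0 addr0 mwiden_deriv PsiE -addrA; congr (_ + _); rewrite raddf_sum /=.
rewrite (eq_bigr (fun i : 'I_k => mwiden (pderiv o p)^`M(i) * 'X_(lift ord0 i)
   + mwiden (p^`M(i)) * (i == o')%:R)); last first.
  move=> i _; rewrite mderivM mderivX1 mwiden_deriv pderiv_comm.
  by rewrite (inj_eq (@lift_inj _ ord0)).
rewrite big_split /=; congr (_ + _).
rewrite (bigD1 o') //= eqxx mulr1 big1 ?addr0 // => i /negbTE ->.
by rewrite mulr0.
Qed.


End PsiSec.
End Aux.

Section Aux2.
Context (R : realType) (n : nat).
Local Notation M := 'M[R]_n.+1.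
Section PsiSec.
Variables (A B : M).
Lemma Q0 m : Qk A B 0 m = 0.
Proof. by rewrite /Qk subn0 pderiv_out. Qed.

Lemma Qrec i m : (i < m)%N ->
  Qk A B i.+1 m.+1 = Psi A B (Qk A B i m) + mwiden (Qk A B i.+1 m).
Proof.
move=> him; rewrite /Qk subSS (_ : Pk A B m.+1 = Psi A B (Pk A B m)) //.
rewrite pderiv_Psi; last by rewrite subn_gt0.
by rewrite subnS.
Qed.

Lemma Q11 : Qk A B 1 1 = B%:MP.
Proof.
rewrite /Qk subnn (_ : Pk A B 1 = Psi A B 1) // (pderivE (ord0 : 'I_1)) PsiE big_ord0 addr0 mwiden1 mul1r.
rewrite mderivD mderivC mderivM mderivC mderivX1 eqxx mulr0 addr0 add0r.
by rewrite mul1r.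
Qed.

End PsiSec.
Lemma comb_lemma (Z : zmodType) (i k : nat) (V W : nat -> Z) :
  W i = 0 -> (forall l, V l.+1 = W l + W l.+1) ->
  \sum_(l < i.+1) V l *+ 'C(k.+1, l) =
  \sum_(l < i.+1) V l *+ 'C(k, l) + \sum_(j < i) W j *+ 'C(k.+1, j).
Proof.
move=> Wi HV.
have ext (c : nat -> nat) : \sum_(j < i) W j *+ c j = \sum_(j < i.+1) W j *+ c j.
  by rewrite big_ord_recr /= Wi mul0rn addr0.
rewrite !big_ord_recl /= !bin0 !mulr1n.
rewrite (eq_bigr (fun l : 'I_i => V (bump 0 l) *+ 'C(k, (bump 0 l)) + V (bump 0 l) *+ 'C(k, l))); last first.
  by move=> l _; rewrite binS mulrnDr.
rewrite big_split /= -!addrA; congr (_ + (_ + _)).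
rewrite (eq_bigr (fun l : 'I_i => W l *+ 'C(k, l) + W (bump 0 l) *+ 'C(k, l))); last first.
  by move=> l _; rewrite /bump leq0n add1n HV mulrnDl.
rewrite big_split /= (ext (fun j => 'C(k, j))) (ext (fun j => 'C(k.+1, j))).
rewrite !big_ord_recl /= !bin0 !mulr1n -addrA; congr (_ + _).
rewrite -big_split /=; apply: eq_bigr => l _.
by rewrite binS mulrnDr.
Qed.

Lemma membed_sumMn a N (h : (a <= N)%N) c (X : nat -> {mpoly M[a]}) (f : nat -> nat) :
  \sum_(l < c) membed h (X l) *+ f l = membed h (\sum_(l < c) X l *+ f l).
Proof. by rewrite rmorph_sum; apply: eq_bigr => l _; rewrite rmorphMn. Qed.

Section Main.
Variables (A B : M).

Definition ClaimQ (i : nat) : Prop := exists U : nat -> {mpoly M[i]},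
  (forall m (h : (i <= m)%N), Qk A B i m = \sum_(j < i) membed h (U j) *+ 'C(m - i, j))
  /\ (0 < i -> U i.-1 = B *: membed (leq_pred i) (Pk A B i.-1))%N.

Definition Wf i (U : nat -> {mpoly M[i]}) j : {mpoly M[i.+1]} :=
  if (j < i)%N then Psi A B (U j) else 0.
Definition Vf i (U : nat -> {mpoly M[i]}) l : {mpoly M[i.+1]} :=
  if l == 0%N then Qk A B i.+1 i.+1 else Wf U l.-1 + Wf U l.

Lemma claim0 : ClaimQ 0.
Proof. by exists (fun _ => 0); split => // m h; rewrite Q0 big_ord0. Qed.

Lemma top_lemma i (U : nat -> {mpoly M[i]}) :
  (0 < i -> U i.-1 = B *: membed (leq_pred i) (Pk A B i.-1))%N ->
  Vf U i = B *: membed (leq_pred i.+1) (Pk A B i).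
Proof.
case: i U => [|i] U Htop.
  rewrite /Vf eqxx Q11 (_ : Pk A B 0 = 1) // rmorph1.
  by rewrite -mul_mpolyC mulr1.
rewrite /Vf /= /Wf ltnn ltnSn addr0 Htop // PsiZ.
by rewrite (Psi_membed _ _ _ (leq_pred i.+2)).
Qed.

Lemma claimS i : ClaimQ i -> ClaimQ i.+1.
Proof.
case=> U [HU Htop].
have Wi : Wf U i = 0 by rewrite /Wf ltnn.
have HV l : Vf U l.+1 = Wf U l + Wf U l.+1 by [].
have HW (c : nat -> nat) :
    \sum_(j < i) Wf U j *+ c j = \sum_(j < i) Psi A B (U j) *+ c j.
  by apply: eq_bigr => j _; rewrite /Wf ltn_ord.
exists (Vf U); split; last by move=> _; apply: top_lemma.
elim=> [//|m IH] h.
have h0 : (i <= m)%N := h.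
have [eim|lim] := eqVneq i m.
  subst m; rewrite subnn big_ord_recl big1 ?addr0; last first.
    by move=> l _; rewrite bin_small // mulr0n.
  have -> : Vf U 0 = Qk A B i.+1 i.+1 by rewrite /Vf eqxx.
  by rewrite bin0 mulr1n membed_id.
have him : (i < m)%N by rewrite ltn_neqAle lim h0.
rewrite Qrec // (HU m (ltnW him)) (IH him) !raddf_sum /=.
have E1 : \sum_(j < i) Psi A B (membed (ltnW him) (U j) *+ 'C(m - i, j)) =
          \sum_(j < i) membed h (Psi A B (U j)) *+ 'C(m - i, j).
  by apply: eq_bigr => j _; rewrite raddfMn /= (Psi_membed _ _ (ltnW him) h).
have E2 : \sum_(l < i.+1) mwiden (membed him (Vf U l) *+ 'C(m - i.+1, l)) =
          \sum_(l < i.+1) membed h (Vf U l) *+ 'C(m - i.+1, l).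
  by apply: eq_bigr => l _; rewrite raddfMn /= mwiden_membed membed_comp.
rewrite E1 E2 !membed_sumMn (membed_sumMn h i (fun j => Psi A B (U j)) (fun j => 'C(m - i, j))) -rmorphD subSS.
have -> : (m - i = (m - i.+1).+1)%N by rewrite subnSK.
by rewrite (@comb_lemma _ i (m - i.+1) (Vf U) (Wf U) Wi HV) HW addrC.
Qed.

Lemma claim_all i : ClaimQ i.
Proof. by elim: i => [|i IH]; [exact: claim0 | exact: claimS]. Qed.

End Main.

Definition bp (j : nat) : {poly R} :=
  ((j`!)%:R)^-1 *: \prod_(0 <= t < j) ('X - (t%:R)%:P).

Lemma bp_size j : (size (bp j) <= j.+1)%N.
Proof.
by rewrite (leq_trans (size_scale_leq _ _)) // size_prod_XsubC size_iota subn0.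
Qed.

Lemma bp_lead j : (bp j)`_j = ((j`!)%:R)^-1.
Proof.
rewrite coefZ.
have Hs : size (\prod_(0 <= t < j) ('X - (t%:R : R)%:P)) = j.+1.
  by rewrite size_prod_XsubC size_iota subn0.
have := lead_coef_prod_XsubC (index_iota 0 j) xpredT (fun t : nat => (t%:R : R)).
by rewrite lead_coefE Hs /= => ->; rewrite mulr1.
Qed.

Lemma bp_eval j k : (bp j).[k%:R] = ('C(k, j))%:R.
Proof.
rewrite hornerZ horner_prod.
rewrite (eq_bigr (fun t : nat => (k%:R - t%:R : R))); last by move=> t _; rewrite hornerXsubC.
have -> : \prod_(0 <= t < j) (k%:R - t%:R : R) = (k ^_ j)%:R.
  elim: j => [|j IH]; first by rewrite big_nil.
  rewrite big_nat_recr //= IH ffactnSr natrM.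
  case: (ltnP k j) => [lt|le]; first by rewrite ffact_small // !mul0r.
  by rewrite natrB.
by rewrite -bin_ffact natrM mulrC mulfK // pnatr_eq0 -lt0n fact_gt0.
Qed.

Theorem lemma1' (A B : 'M[R]_n.+1) (i : nat) :
  (0 < i)%N ->
  exists Rs : nat -> {mpoly 'M[R]_n.+1[i]},
    (forall k : nat,
        Qk A B i (i + k) =
        \sum_(0 <= j < i) membed (leq_addr k i) (Rs j) *+ (k ^ j)%N)
    /\ Rs i.-1 =
       (((i.-1)`!)%:R^-1 : R)%:M%:MP * (B%:MP * membed (leq_pred i) (Pk A B i.-1)).
Proof.
move=> i0.
have [U [HU Htop]] := claim_all A B i.
exists (fun l => \sum_(j < i) ((bp j)`_l)%:M *: U j).
split.
- move=> k; rewrite (HU (i + k)%N (leq_addr k i)) addKn big_mkord.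
  set h := leq_addr k i.
  rewrite [RHS](eq_bigr (fun l : 'I_i => \sum_(j < i) ((bp j)`_l)%:M *: membed h (U j) *+ (k ^ l)%N)); last first.
    move=> l _; rewrite (raddf_sum (membed h)) -sumrMnl; apply: eq_bigr => j _.
    congr (_ *+ _); exact: membedZ.
  rewrite exchange_big /=; apply: eq_bigr => j _.
  set v := membed h (U j).
  rewrite (eq_bigr (fun l : 'I_i => (((bp j)`_l * k%:R ^+ l)%:M) *: v)); last first.
    by move=> l _; rewrite scalerMnl -natrX mulr_natr raddfMn.
  rewrite -scaler_suml -raddf_sum -horner_coef_wide; last first.
    exact: leq_trans (bp_size j) (ltn_ord j).
  by rewrite bp_eval raddfMn -scalerMnl scale1r.
- case: i i0 U HU Htop => [//|i] _ U HU Htop /=.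
  rewrite big_ord_recr /= big1 ?add0r; last first.
    move=> j _; rewrite nth_default; first by rewrite raddf0 scale0r.
    exact: leq_trans (bp_size j) (ltn_ord j).
  by rewrite bp_lead Htop // !mul_mpolyC.
Qed.
End Aux2.

Unset Implicit Arguments.

Theorem lemma1 (R : realType) (n : nat) (A B : 'M[R]_n.+1) (i : nat) :
  (0 < i)%N ->
  exists Rs : nat -> {mpoly 'M[R]_n.+1[i]},
    (forall k : nat,
        Qk A B i (i + k) =
        \sum_(0 <= j < i) membed (leq_addr k i) (Rs j) *+ (k ^ j)%N)
    /\ Rs i.-1 =
       (((i.-1)`!)%:R^-1 : R)%:M%:MP * (B%:MP * membed (leq_pred i) (Pk A B i.-1)).
Proof. exact: lemma1'. Qed.
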